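(* Let $\{C_i\}_{i\in\Gamma}$ be a family of compact Hausdorff spaces, $X=\bigsqcup_{i\in\Gamma}C_i$ their topological coproduct, $\pi:X\to\Gamma$ with $\pi(C_i)=\{i\}$, and $\varepsilon=\{e\subseteq X\times X:\exists f\subseteq\Gamma\times\Gamma \text{ with } f\setminus\Delta\Gamma \text{ finite and } e\subseteq(\pi\times\pi)^{-1}(f)\}$. Let $X+_fY$ be a Hausdorff compact space with $Y$ compact Hausdorff and $f$ admissible, and let $\sim$ be the equivalence relation on $X+_fY$ given by $\sim\ =\Delta(X+_fY)\cup\bigcup_{i\in\Gamma}C_i\times C_i$. Then $X+_fY\in\mathrm{Pers}(\varepsilon)$ if and only if the quotient $(X+_fY)/\!\sim$ is Hausdorff.
   Context: Artin–Wraith glueing: $\mathrm{Closed}(A)$ is the set of closed subsets of $A$; $f:\mathrm{Closed}(A)\to\mathrm{Closed}(B)$ is admissible if $f(\emptyset)=\emptyset$ and $f$ preserves finite unions; $A+_fB$ is $A\sqcup B$ with closed sets the $D$ such that $D\cap A$ is closed in $A$, $D\cap B$ closed in $B$ and $f(D\cap A)\subseteq D$. $\mathrm{Comp}(X)$ is the category of compact spaces $X+_fW$ with $W$ compact Hausdorff, morphisms continuous maps which are the identity on $X$. For a Hausdorff compactification $X+_fW$ of $X$ ($X$ dense), $e\subseteq X\times X$ is perspective if $\mathrm{Cl}_{(X+_fW)^2}(e)\cap((X+_fW)^2-X^2)\subseteq\{(p,p):p\in W\}$; $\varepsilon_f$ is the set of perspective sets; the compactification is perspective if $\varepsilon\subseteq\varepsilon_f$;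 $\mathrm{Pers}(\varepsilon)$ is the full subcategory of $\mathrm{Comp}(X)$ of perspective compactifications. *)

(* Defs.v *)
From HB Require Import structures.
From mathcomp Require Import all_boot all_algebra generic_quotient.
From mathcomp Require Import all_classical topology sigT_topology quotient_topology.
Set Implicit Arguments. Unset Strict Implicit. Unset Printing Implicit Defensive.
Local Open Scope classical_set_scope.
Local Open Scope quotient_scope.

Section Gluing.
Context {Gamma : choiceType} (C : Gamma -> topologicalType) (Y : topologicalType).

Definition Xsp := {i : Gamma & C i}.

Definition admissible (f : set Xsp -> set Y) : Prop :=
  [/\ (forall D, closed D -> closed (f D)),
      f set0 = set0 &
      (forall D E, closed D -> closed E -> f (D `|` E) = f D `|` f E)].

Definition glued_closed (f : set Xsp -> set Y) (D : set (Xsp + Y)) : Prop :=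
  [/\ closed (inl @^-1` D), closed (inr @^-1` D) & f (inl @^-1` D) `<=` inr @^-1` D].

Variables (f : set Xsp -> set Y) (hf : admissible f).

Definition glued (h : admissible f) : Type := (Xsp + Y)%type.
HB.instance Definition _ := Choice.on (glued hf).

Definition glued_open (U : set (glued hf)) := glued_closed f (~` U).

Lemma adm_mono (A B : set Xsp) : closed A -> closed B -> A `<=` B -> f A `<=` f B.
Proof.
have [_ _ hU] := hf; move=> cA cB AB; have -> : B = A `|` B by rewrite setUidr.
by rewrite hU //; apply: subsetUl.
Qed.

Lemma glued_openT : glued_open setT.
Proof.
have [_ h0 _] := hf; rewrite /glued_open setCT /glued_closed !preimage_set0 h0.
by split => //; exact: closed0.
Qed.

Lemma glued_openI (A B : set (glued hf)) : glued_open A -> glued_open B -> glued_open (A `&` B).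
Proof.
have [_ _ hU] := hf; move=> [cA1 cA2 fA] [cB1 cB2 fB]; rewrite /glued_open setCI.
split; rewrite ?preimage_setU; try exact: closedU.
by rewrite hU // => y [/fA|/fB]; [left|right].
Qed.

Lemma glued_open_bigcup (I : Type) (F : I -> set (glued hf)) :
  (forall i, glued_open (F i)) -> glued_open (\bigcup_i F i).
Proof.
move=> oF; rewrite /glued_open setC_bigcup.
have c1 : closed (inl @^-1` \bigcap_i ~` F i).
  by rewrite preimage_bigcap; apply: closed_bigI => i _; case: (oF i).
split => //.
  by rewrite preimage_bigcap; apply: closed_bigI => i _; case: (oF i).
move=> y fy; rewrite preimage_bigcap => i _.
case: (oF i) => ci _ fi; apply: fi; apply: (adm_mono c1 ci) fy.
by move=> x /= H; exact: H.
Qed.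

HB.instance Definition _ := isOpenTopological.Build (glued hf)
  glued_openT glued_openI glued_open_bigcup.

Definition simR (a b : glued hf) : Prop :=
  a = b \/ exists i (x y : C i), a = inl (existT _ i x) /\ b = inl (existT _ i y).

Definition simb (a b : glued hf) : bool := `[< simR a b >].

Lemma simb_refl : reflexive simb.
Proof. by move=> a; apply/asboolP; left. Qed.

Lemma simb_sym : symmetric simb.
Proof.
have H a b : simb a b -> simb b a.
  move=> /asboolP [->|[i [x [y [-> ->]]]]]; apply/asboolP; first by left.
  by right; exists i, y, x.
by move=> a b; apply/idP/idP; apply: H.
Qed.

Lemma simb_trans : transitive simb.
Proof.
move=> b a c /asboolP [<-//|[i [x [y [-> ->]]]]] /asboolP [<-|[j [u [v [E ->]]]]].
  by apply/asboolP; right; exists i, x, y.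
case: E => Eij; subst j => _; apply/asboolP; right; exists i, x, v; split => //.
Qed.

Definition simE : equiv_rel (glued hf) := EquivRel simb simb_refl simb_sym simb_trans.

Definition glued_quot := quotient_topology {eq_quot simE}.

Definition perspective (e : set (Xsp * Xsp)) : Prop :=
  closure ((fun p : Xsp * Xsp => ((inl p.1 : glued hf), (inl p.2 : glued hf))) @` e)
    `&` ~` [set p : glued hf * glued hf | exists a b, p = (inl a, inl b)]
  `<=` [set p : glued hf * glued hf | exists y, p = (inr y, inr y)].

Definition eps_f : set (set (Xsp * Xsp)) := perspective.

End Gluing.

Definition eps_coprod {Gamma : choiceType} (C : Gamma -> topologicalType)
  : set (set (Xsp C * Xsp C)) :=
  [set e | exists F : set (Gamma * Gamma),
     finite_set (F `\` [set p | p.1 = p.2]) /\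
     e `<=` [set p | F (projT1 p.1, projT1 p.2)]].

Definition in_Pers {Gamma : choiceType} (C : Gamma -> topologicalType) (Y : topologicalType)
  (f : set (Xsp C) -> set Y) (hf : admissible f) (eps : set (set (Xsp C * Xsp C))) : Prop :=
  eps `<=` eps_f hf.

Arguments glued {Gamma C Y f} h.
Arguments glued_quot {Gamma C Y f} hf.
Arguments eps_f {Gamma C Y f} hf.
Arguments in_Pers {Gamma C Y f} hf eps.
Arguments admissible {Gamma C Y} f.
Arguments eps_coprod {Gamma} C.

(* Main.v *)
Require Import Defs.
From HB Require Import structures.
From mathcomp Require Import all_boot all_algebra generic_quotient.
From mathcomp Require Import all_classical topology sigT_topology quotient_topology.
Local Open Scope classical_set_scope.

Module Aux.
Local Open Scope quotient_scope.

Section H.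
Context {Gamma : choiceType} (C : Gamma -> topologicalType) (Y : topologicalType).
Variables (f : set (Xsp C) -> set Y) (hf : admissible f).
Local Notation Z := (glued hf).

Definition lab (z : Z) : option Gamma :=
  match z with inl s => Some (projT1 s) | inr _ => None end.
Definition Ci (i : Gamma) : set Z := [set z | lab z = Some i].

Lemma open_glued (U : set Z) : open U <-> glued_closed f (~` U).
Proof. by []. Qed.

Lemma simRE (a b : Z) : simR a b <-> a = b \/ (lab a = lab b /\ lab a <> None).
Proof.
split.
  case=> [->|[i [x [y [-> ->]]]]]; [by left|by right].
case=> [->|[]]; first by left.
case: a => [[i x]|a]; case: b => [[j y]|b] //=.
case=> E _; subst j; by right; exists i, x, y.
Qed.

Lemma Ci_open i : open (Ci i).
Proof.
apply/open_glued; split.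
- have -> : @preimage (Xsp C) (Xsp C + Y)%type inl (~` Ci i) =
     ~` [set s : Xsp C | projT1 s = i].
    by apply/seteqP; split => s /=; [move=> H E; apply: H; rewrite /Ci /= E|
      move=> H [E]; exact: H].
  rewrite closedC; apply/sigT_openP => j.
  case: (pselect (j = i)) => [->|ne].
    have -> : existT _ i @^-1` [set s : Xsp C | projT1 s = i] = setT by
      apply/seteqP; split.
    exact: openT.
  have -> : existT _ j @^-1` [set s : Xsp C | projT1 s = i] = set0 by
      apply/seteqP; split => // x /= E.
  exact: open0.
- have -> : @preimage Y (Xsp C + Y)%type inr (~` Ci i) = setT by apply/seteqP; split.
  exact: closedT.
- by [].
Qed.


Definition gi i (x : C i) : Z := inl (existT _ i x).

Lemma gi_cont i : continuous (@gi i).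
Proof.
apply/continuousP => U [cU _ _].
rewrite preimage_setC closedC in cU.
have := (sigT_openP _).1 cU i.
by [].
Qed.

Lemma Ci_img i : Ci i = @gi i @` setT.
Proof.
apply/seteqP; split => z.
  case: z => [[j x]|y] //= [E]; subst j; by exists x.
by case=> x _ <-.
Qed.

Lemma Ci_closed i : compact [set: C i] -> hausdorff_space Z -> closed (Ci i).
Proof.
move=> ci hZ; apply: compact_closed => //; rewrite Ci_img.
apply: continuous_compact => //; apply: continuous_subspaceT => x.
move=> xA.
exact: gi_cont.
Qed.

Local Notation Q := (glued_quot hf).

Lemma piE (a b : Z) : (\pi_Q a = \pi_Q b) <-> simR a b.
Proof.
split.
  by move=> /eqmodP /asboolP.
by move=> H; apply/eqmodP; apply/asboolP.
Qed.


Lemma simR_sym {a b : Z} : simR a b -> simR b a.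
Proof. by move=> h; apply/asboolP; change (simb b a); rewrite simb_sym; apply/asboolP. Qed.

Lemma simR_trans {a b c : Z} : simR a b -> simR b c -> simR a c.
Proof.
move=> h1 h2; apply/asboolP; apply: (@simb_trans _ _ _ _ hf b); exact/asboolP.
Qed.

Definition sat (U : set Z) := forall a b : Z, simR a b -> U a -> U b.

Lemma satC U : sat U -> sat (~` U).
Proof. by move=> sU a b /simR_sym h nUa Ub; apply: nUa; exact: sU h Ub. Qed.

Lemma sat_Ci i : sat (Ci i).
Proof. by move=> a b /simRE [<-//|[E _]]; rewrite /Ci /= -E. Qed.

Lemma sep_sat (U V : set Z) a b : open U -> open V -> sat U -> sat V ->
  U a -> V b -> U `&` V = set0 ->
  exists2 AB : set Q * set Q, (\pi_Q a \in AB.1 /\ \pi_Q b \in AB.2) &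
     [/\ open AB.1, open AB.2 & AB.1 `&` AB.2 == set0].
Proof.
move=> oU oV sU sV Ua Vb UV0.
have pre W : sat W -> \pi_Q @^-1` (\pi_Q @` W) = W.
  move=> sW; apply/seteqP; split => z /=; last by move=> Wz; exists z.
  by case=> w Ww /piE h; exact: sW h Ww.
exists (\pi_Q @` U, \pi_Q @` V) => /=.
  by rewrite !inE; split; [exists a|exists b].
split.
- by change (open (\pi_Q @^-1` (\pi_Q @` U))); rewrite pre.
- by change (open (\pi_Q @^-1` (\pi_Q @` V))); rewrite pre.
- apply/eqP/seteqP; split => // q [[u Uu <-] [v Vv /piE /simR_sym h]].
  have : (U `&` V) v by split => //; exact: sU h Uu.
  by rewrite UV0.
Qed.


Lemma pers_haus : (forall i, compact [set: C i]) -> hausdorff_space Z ->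
  in_Pers hf (eps_coprod C) -> hausdorff_space Q.
Proof.
move=> cC hZ Hp; rewrite open_hausdorff => x y.
rewrite -(reprK x) -(reprK y); set a := repr x; set b := repr y => /eqP ab.
have nab : ~ simR a b by move=> h; apply: ab; exact/piE.
case: a nab {ab} => [s|y1]; case: b => [t|y2] nab.
- apply: (@sep_sat (Ci (projT1 s)) (Ci (projT1 t))) => //; try exact: Ci_open;
    try exact: sat_Ci.
  apply/seteqP; split => // z [Hs Ht]; apply: nab; apply/simRE; right.
  by rewrite /Ci /= in Hs Ht; split => //=; rewrite -Hs -Ht.
- apply: (@sep_sat (Ci (projT1 s)) (~` Ci (projT1 s))) => //.
  + exact: Ci_open.
  + by rewrite openC; exact: Ci_closed.
  + exact: sat_Ci.
  + exact/satC/sat_Ci.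
  + by rewrite setICr.
- apply: (@sep_sat (~` Ci (projT1 t)) (Ci (projT1 t))) => //.
  + by rewrite openC; exact: Ci_closed.
  + exact: Ci_open.
  + exact/satC/sat_Ci.
  + exact: sat_Ci.
  + by rewrite setICl.
- have y12 : (inr y1 : Z) != inr y2 by apply/eqP => E; apply: nab; left.
  have := hZ; rewrite open_hausdorff => /(_ _ _ y12) [[W1 W2] /=].
  rewrite !inE => -[W1y W2y] [oW1 oW2 /eqP W12].
  pose e0 : set (Xsp C * Xsp C) := [set p | projT1 p.1 = projT1 p.2].
  have He0 : eps_coprod C e0.
    exists [set p | p.1 = p.2]; split => //.
    by rewrite setDv; exact: finite_set0.
  have := Hp e0 He0 (inr y1, inr y2).
  rewrite /= => P.
  have ncl : ~ closure [set ((inl p.1 : Z), (inl p.2 : Z)) | p in e0] (inr y1, inr y2).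
    move=> cl; have [|yy [E1 E2]] := P.
      by split => // -[a [b []]].
    by apply: nab; left; rewrite E1 E2.
  move/existsNP: ncl => [B /not_implyP [nB nm]].
  case: nB => -[P1 P2] /= [n1 n2] sub.
  move: n1; rewrite nbhsE => -[O1' [oO1' O1y] O1P].
  move: n2; rewrite nbhsE => -[O2' [oO2' O2y] O2P].
  pose O1 := O1' `&` W1; pose O2 := O2' `&` W2.
  have oO1 : open O1 by exact: openI.
  have oO2 : open O2 by exact: openI.
  have satO (O : set Z) : open O -> 
      open [set z | exists2 w, O w & simR w z] /\ sat [set z | exists2 w, O w & simR w z].
    move=> oO; split; last first.
      by move=> a' b' ab' [w Ow wa]; exists w => //; exact: simR_trans wa ab'.
    rewrite openE => z [w Ow /simRE [<-|[E nN]]].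
      apply: (@filterS _ _ _ O); first by move=> u Ou; exists u => //; left.
      exact: open_nbhs_nbhs.
    case E' : (lab z) => [i|]; last by rewrite E E' in nN.
    apply: (@filterS _ _ _ (Ci i)).
      move=> u Cu; exists w => //; apply/simRE; right; split => //.
      by rewrite E E' Cu.
    by apply: open_nbhs_nbhs; split => //; exact: Ci_open.
  have [oV1 sV1] := satO _ oO1.
  have [oV2 sV2] := satO _ oO2.
  apply: (@sep_sat _ _ (inr y1) (inr y2) oV1 oV2 sV1 sV2).
  - by exists (inr y1); [split|left].
  - by exists (inr y2); [split|left].
  apply/seteqP; split => // z [[w1 O1w1 s1] [w2 O2w2 s2]].
  have := simR_trans s1 (simR_sym s2).
  case/simRE => [E|[E nN]].
    subst w2; have : (W1 `&` W2) w1 by split; [exact: O1w1.2|exact: O2w2.2].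
    by move: W12 => /eqP ->.
  case: w1 E nN O1w1 {s1} => [s|?]; case: w2 O2w2 {s2} => [t|?] //= O2t [E] _ O1s.
  apply: nm; exists ((inl s : Z), (inl t : Z)); split.
    by exists (s, t).
  by apply: sub; split; [exact: O1P O1s.1|exact: O2P O2t.1].
Qed.


Lemma haus_pers : (forall i, compact [set: C i]) -> hausdorff_space Z ->
  hausdorff_space Q -> in_Pers hf (eps_coprod C).
Proof.
move=> cC hZ hQ e [F [finG sub]] [p q] [cl nX].
have Hs : simR p q.
  apply: contrapT => nsim.
  have pq : \pi_Q p != \pi_Q q by apply/eqP => /piE.
  move: hQ; rewrite open_hausdorff => /(_ _ _ pq) [[A1 A2] /=].
  rewrite !inE => -[A1p A2q] [oA1 oA2 /eqP A12].
  have oU : open (\pi_Q @^-1` A1 : set Z) by exact: oA1.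
  have oV : open (\pi_Q @^-1` A2 : set Z) by exact: oA2.
  pose K : set Z := \bigcup_(k in F `\` [set p | p.1 = p.2]) (Ci k.1 `|` Ci k.2).
  have cK : closed K.
    apply: closed_bigcup => // k _; apply: closedU; exact: Ci_closed.
  pose Ny (z : Z) : set Z := if z is inr _ then ~` K else setT.
  have nN z : nbhs z (Ny z).
    case: z => [a|yy] /=; first exact: filterT.
    apply: open_nbhs_nbhs; split; first by rewrite openC.
    by move=> [k _ [|]].
  have nb : nbhs (p, q) ((\pi_Q @^-1` A1 `&` Ny p) `*` (\pi_Q @^-1` A2 `&` Ny q)).
    exists (\pi_Q @^-1` A1 `&` Ny p, \pi_Q @^-1` A2 `&` Ny q) => //=.
    split; apply: filterI => //; exact: open_nbhs_nbhs.
  have [z [[[s t] es <-] /= [[Us Ns] [Vt Nt]]]] := cl _ nb.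
  have Fst := sub _ es; rewrite /= in Fst.
  case: (pselect (projT1 s = projT1 t)) => Est.
    have /piE h : simR (inl s : Z) (inl t) by apply/simRE; right; rewrite /= Est.
    have : (A1 `&` A2) (\pi_Q (inl t)) by split => //; rewrite -h.
    by move: A12 => /eqP ->.
  have Kst : K (inl s) /\ K (inl t).
    by split; exists (projT1 s, projT1 t) => //; [left|right].
  case: p nX Ns {cl nb Us A1p nsim pq} => [a|yy] nX Ns; last by apply: Ns; case: Kst.
  case: q nX Nt {Vt A2q} => [b|yy] nX Nt; last by apply: Nt; case: Kst.
  by apply: nX; exists a, b.
have {nX} nX : ~ (exists a b, (p, q) = ((inl a : Z), (inl b : Z))) := nX.
clear cl; case/simRE: Hs => [E|[E nN]].
  subst q; case: p nX => [a|yy] nX; last by exists yy.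
  by case: nX; exists a, a.
case: p q nX E nN => [a|yy]; case=> [b|yy'] nX //= _ _.
by case: nX; exists a, b.
Qed.

End H.
End Aux.

Theorem mainTheorem5 (Gamma : choiceType) (C : Gamma -> topologicalType)
  (Y : topologicalType) (f : set (Xsp C) -> set Y) (hf : admissible f) :
  (forall i, compact [set: C i]) -> (forall i, hausdorff_space (C i)) ->
  compact [set: Y] -> hausdorff_space Y ->
  compact [set: glued hf] -> hausdorff_space (glued hf) ->
  (in_Pers hf (eps_coprod C) <-> hausdorff_space (glued_quot hf)).
Proof.
move=> cC _ _ _ _ hZ; split.
  exact: Aux.pers_haus.
exact: Aux.haus_pers.
Qed.
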